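(* Let $\mathcal{H}_B$ be the two-mode bosonic Fock space with orthonormal basis $\{\lvert m_1, m_0\rangle_B : m_1, m_0 \ge 0\}$, where $\lvert m_1,m_0\rangle_B$ denotes $m_1$ photons in the ''$1$'' mode and $m_0$ photons in the ''$0$'' mode. Let $\mathcal{H}_E$ be a Hilbert space. Let $$\lvert\psi_0\rangle = \sum_{m_1\ge 0,\, m_0\ge 0} \lvert m_1,m_0\rangle_B \lvert e_{m_1,m_0}\rangle_E \in \mathcal{H}_B\otimes\mathcal{H}_E$$ be a unit vector, where the $\lvert e_{m_1,m_0}\rangle_E\in\mathcal{H}_E$ are (unnormalized) vectors. Let $U_R$ be a unitary operator on $\mathcal{H}_B\otimes\mathcal{H}_E$ such that for all $m_1,m_0\ge 0$, $$U_R \lvert m_1,m_0\rangle_B\lvert e_{m_1,m_0}\rangle_E = \lvert 0,1\rangle_B \lvert g^{0,1}_{m_1,m_0}\rangle_E + \lvert 1,0\rangle_B \lvert g^{1,0}_{m_1,m_0}\rangle_E + \lvert 0,0\rangle_B \lvert g^{0,0}_{m_1,m_0}\rangle_E$$ for some vectors $\lvert g^{j,k}_{m_1,m_0}\rangle_E\in\mathcal{H}_E$. Define $$\lvert h_0\rangle_E = \frac{1}{\sqrt 2}\sum_{m_1\ge 1,\, m_0\ge 1}\lvert g^{0,1}_{m_1,m_0}\rangle_E,\qquad \lvert h_1\rangle_E = \frac{1}{\sqrt 2}\sum_{m_1\ge 1,\, m_0\ge 1}\lvert g^{1,0}_{m_1,m_0}\rangle_E,$$ and $$p_{\mathrm{double}}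 = \sum_{m_1\ge 1,\, m_0\ge 1}\langle e_{m_1,m_0}\vert e_{m_1,m_0}\rangle_E .$$ Then $\langle h_0\vert h_0\rangle_E \le \frac12 p_{\mathrm{double}}$ and $\langle h_1\vert h_1\rangle_E \le \frac12 p_{\mathrm{double}}$.
   Context: $p_{\mathrm{double}}$ is the probability that a computational-basis photon-number measurement of the $B$ system of $\lvert\psi_0\rangle$ yields at least one photon in each of the two modes (a ''double-click''). Infinite sums are understood as norm-convergent sums in the respective Hilbert spaces. *)

(* Defs.v *)
From HB Require Import structures.
From mathcomp Require Import all_boot all_order all_algebra.
From mathcomp Require Import complex.
From mathcomp Require Import reals.
Set Implicit Arguments.
Unset Strict Implicit.
Unset Printing Implicit Defensive.
Import Order.TTheory GRing.Theory Num.Theory.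
Local Open Scope ring_scope.
Local Open Scope complex_scope.

Section Defs.
Variable R : realType.
Local Notation C := R[i].

(* Inner product (physics convention: antilinear in the first argument,
   linear in the second) on a complex vector space E. *)
Definition is_inner_product (E : lmodType C) (ip : E -> E -> C) : Prop :=
  [/\ (forall (a : C) (x y z : E), ip x (a *: y + z) = a * ip x y + ip x z),
      (forall x y : E, ip y x = (ip x y)^*),
      (forall x : E, 0 <= ip x x)
    & (forall x : E, ip x x = 0 -> x = 0)].

Definition nsq (E : lmodType C) (ip : E -> E -> C) (x : E) : R := complex.Re (ip x x).

Definition ip_complete (E : lmodType C) (ip : E -> E -> C) : Prop :=
  forall u : nat -> E,
    (forall eps : R, 0 < eps -> exists N : nat, forall m n : nat,
        (N <= m)%N -> (N <= n)%N -> nsq ip (u m - u n) < eps) ->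
    exists l : E, forall eps : R, 0 < eps -> exists N : nat, forall n : nat,
        (N <= n)%N -> nsq ip (u n - l) < eps.

Definition is_hilbert (E : lmodType C) (ip : E -> E -> C) : Prop :=
  is_inner_product ip /\ ip_complete ip.

(* Unordered (norm-)convergent sum over the index set {i | P i}:
   the net of finite partial sums converges to S w.r.t. the
   "size" function d (d = squared norm, or modulus). *)
Definition has_sum (V : zmodType) (d : V -> R) (I : eqType)
    (P : pred I) (f : I -> V) (S : V) : Prop :=
  forall eps : R, 0 < eps -> exists s0 : seq I, all P s0 /\
    forall s : seq I, uniq s -> all P s -> {subset s0 <= s} ->
      d (\sum_(i <- s) f i - S) < eps.

Definition Chas_sum (I : eqType) (P : pred I) (f : I -> C) (S : C) : Prop :=
  has_sum (fun z : C => complex.Re `|z|) P f S.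

Definition Ehas_sum (E : lmodType C) (ip : E -> E -> C)
    (I : eqType) (P : pred I) (f : I -> E) (S : E) : Prop :=
  has_sum (nsq ip) P f S.

(* Two-mode Fock space tensor H_E, realised as l^2(N x N; H_E):
   the vector  sum_{m} |m1,m0>_B |v_m>_E  is the function m |-> v_m. *)
Definition state (E : lmodType C) := (nat * nat -> E)%type.

Definition l2_norm_sq (E : lmodType C) (ip : E -> E -> C) (f : state E) (s : C) :=
  Chas_sum predT (fun m => ip (f m) (f m)) s.

Definition in_l2 (E : lmodType C) (ip : E -> E -> C) (f : state E) :=
  exists s, l2_norm_sq ip f s.

Definition ket (E : lmodType C) (m : nat * nat) (v : E) : state E :=
  fun k => if k == m then v else 0.

Definition unitary (E : lmodType C) (ip : E -> E -> C)
    (U : state E -> state E) : Prop :=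
  [/\ (forall (a b : C) (f g : state E), in_l2 ip f -> in_l2 ip g ->
         U (fun m => a *: f m + b *: g m) = (fun m => a *: U f m + b *: U g m)),
      (forall (f : state E) (s : C), l2_norm_sq ip f s -> l2_norm_sq ip (U f) s)
    & (forall g : state E, in_l2 ip g -> exists f, in_l2 ip f /\ U f = g)].

End Defs.

(* Main.v *)
Require Import Defs.
From HB Require Import structures.
From mathcomp Require Import all_boot all_order all_algebra.
From mathcomp Require Import complex.
From mathcomp Require Import reals.
From mathcomp Require Import ring lra.
From Stdlib Require Import FunctionalExtensionality.
Set Implicit Arguments.
Unset Strict Implicit.
Import Order.TTheory GRing.Theory Num.Theory.
Local Open Scope ring_scope.
Local Open Scope complex_scope.

Section IP.
Variable R : realType.
Variable E : lmodType R[i].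
Variable ip : E -> E -> R[i].
Hypothesis Hip : is_inner_product ip.

Lemma ipD x y z : ip x (y + z) = ip x y + ip x z.
Proof. by case: Hip => L _ _ _; have := L 1 x y z; rewrite scale1r mul1r. Qed.
Lemma ip0 x : ip x 0 = 0.
Proof.
have h := ipD x 0 0; rewrite addr0 in h.
have : ip x 0 + ip x 0 - ip x 0 = ip x 0 - ip x 0 by rewrite -h.
by rewrite addrK subrr.
Qed.
Lemma ipZ a x y : ip x (a *: y) = a * ip x y.
Proof. by case: Hip => L _ _ _; have := L a x y 0; rewrite addr0 ip0 addr0. Qed.
Lemma ipC x y : ip y x = conjc (ip x y).
Proof. by case: Hip. Qed.
Lemma cjD (a b : R[i]) : conjc (a + b) = conjc a + conjc b.
Proof. by case: a; case: b => *; rewrite /= opprD. Qed.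
Lemma cjM (a b : R[i]) : conjc (a * b) = conjc a * conjc b.
Proof. by case: a; case: b => *; rewrite /=; congr (_ +i* _); ring. Qed.
Lemma cjN (a : R[i]) : conjc (- a) = - conjc a.
Proof. by case: a => *. Qed.
Lemma cj0 : conjc (0 : R[i]) = 0.
Proof. by rewrite /= oppr0. Qed.
Lemma ipDl x y z : ip (x + y) z = ip x z + ip y z.
Proof. by rewrite ipC ipD cjD -!ipC. Qed.
Lemma ipZl a x y : ip (a *: x) y = conjc a * ip x y.
Proof. by rewrite ipC ipZ cjM -ipC. Qed.
Lemma ipN x y : ip x (- y) = - ip x y.
Proof. by rewrite -scaleN1r ipZ mulN1r. Qed.
Lemma ipNl x y : ip (- x) y = - ip x y.
Proof. by rewrite ipC ipN cjN -ipC. Qed.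
Lemma ip0l x : ip 0 x = 0.
Proof. by rewrite ipC ip0 cj0. Qed.
Lemma ip_ge0 x : 0 <= ip x x.
Proof. by case: Hip. Qed.
Lemma nsq_ge0 x : 0 <= nsq ip x.
Proof. by have := ip_ge0 x; rewrite lecE /= => /andP[]. Qed.
Lemma ipIm x : complex.Im (ip x x) = 0.
Proof. by have := ip_ge0 x; rewrite lecE => /andP[/eqP H _]; rewrite H. Qed.
Lemma ipRe x : ip x x = (nsq ip x)%:C.
Proof. by rewrite /nsq; case: (ip x x) (ipIm x) => a b /= ->. Qed.

Lemma ReJ (z : R[i]) : complex.Re (conjc z) = complex.Re z.
Proof. by case: z. Qed.

Lemma nsqD x y : nsq ip (x + y) = nsq ip x + nsq ip y + 2 * complex.Re (ip x y).
Proof.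
rewrite /nsq ipDl !ipD (ipC y x) !raddfD /= ReJ; lra.
Qed.

Lemma nsqN x : nsq ip (- x) = nsq ip x.
Proof. by rewrite /nsq ipNl ipN opprK. Qed.

Lemma nsqZr (k : R) x : nsq ip (k%:C *: x) = k ^+ 2 * nsq ip x.
Proof.
by rewrite /nsq ipZl ipZ conjc_real mulrA ipRe -!rmorphM /= expr2.
Qed.

Lemma ReZr (k : R) (z : R[i]) : complex.Re (k%:C * z) = k * complex.Re z.
Proof. by case: z => a b /=; rewrite mul0r subr0. Qed.

Lemma ipZr_real (k : R) x y : complex.Re (ip x (k%:C *: y)) = k * complex.Re (ip x y).
Proof. by rewrite ipZ ReZr. Qed.

Lemma nsqD_le x y t : 0 < t ->
  nsq ip (x + y) <= (1 + t) * nsq ip x + (1 + t^-1) * nsq ip y.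
Proof.
move=> t0.
have H := nsq_ge0 (t%:C *: x - y).
rewrite nsqD nsqZr nsqN ipN ipZl conjc_real raddfN /= ReZr in H.
rewrite nsqD.
have Hx := nsq_ge0 x; have Hy := nsq_ge0 y.
set a := nsq ip x in H Hx *; set b := nsq ip y in H Hy *; set c := complex.Re (ip x y) in H *.
have tV : t * t^-1 = 1 by rewrite mulfV // gt_eqF.
have tV0 : 0 < t^-1 by rewrite invr_gt0.
(* 0 <= t^2 a + b - 2 t c  ->  2c <= t a + b/t *)
have : 2 * c <= t * a + t^-1 * b.
  have := mulr_ge0 (ltW tV0) H.
  move=> H2.
  have E1 : t^-1 * (t ^+ 2 * a + b + 2 * - (t * c)) = t * a + t^-1 * b - 2 * c.
    by field; rewrite gt_eqF.
  by rewrite E1 subr_ge0 in H2.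
move=> H3; nra.
Qed.

End IP.

Section Sums.
Variable R : realType.

Lemma ReD (a b : R[i]) : complex.Re (a + b) = complex.Re a + complex.Re b.
Proof. by case: a; case: b. Qed.
Lemma ImD (a b : R[i]) : complex.Im (a + b) = complex.Im a + complex.Im b.
Proof. by case: a; case: b. Qed.
Lemma ReB (a b : R[i]) : complex.Re (a - b) = complex.Re a - complex.Re b.
Proof. by case: a; case: b. Qed.
Lemma ImB (a b : R[i]) : complex.Im (a - b) = complex.Im a - complex.Im b.
Proof. by case: a; case: b. Qed.
Lemma Re_sum (I : Type) (s : seq I) (F : I -> R[i]) :
  complex.Re (\sum_(i <- s) F i) = \sum_(i <- s) complex.Re (F i).
Proof. elim: s => [|x s IH]; first by rewrite !big_nil. by rewrite !big_cons ReD IH. Qed.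
Lemma Im_sum (I : Type) (s : seq I) (F : I -> R[i]) :
  complex.Im (\sum_(i <- s) F i) = \sum_(i <- s) complex.Im (F i).
Proof. elim: s => [|x s IH]; first by rewrite !big_nil. by rewrite !big_cons ImD IH. Qed.

Lemma normRe (z : R[i]) : `|z| = (complex.Re `|z|)%:C.
Proof. by rewrite normc_def. Qed.

Lemma Re_le_norm (z : R[i]) : complex.Re z <= complex.Re `|z|.
Proof.
rewrite normc_def /=.
apply: (le_trans (ler_norm _)).
rewrite -sqrtr_sqr ler_sqrt; last by rewrite addr_ge0 // sqr_ge0.
by rewrite lerDl sqr_ge0.
Qed.

Lemma Im_le_norm (z : R[i]) : `|complex.Im z| <= complex.Re `|z|.
Proof.
rewrite normc_def /=.
rewrite -sqrtr_sqr ler_sqrt; last by rewrite addr_ge0 // sqr_ge0.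
by rewrite lerDr sqr_ge0.
Qed.

Lemma Renorm_ge0 (z : R[i]) : 0 <= complex.Re `|z|.
Proof. by rewrite normc_def /= sqrtr_ge0. Qed.

Lemma Renorm_tri (a b : R[i]) :
  complex.Re `|a + b| <= complex.Re `|a| + complex.Re `|b|.
Proof. by have := ler_normD a b; rewrite lecE ReD => /andP[_]. Qed.

Lemma Renorm_N (a : R[i]) : complex.Re `|- a| = complex.Re `|a|.
Proof. by rewrite normrN. Qed.

Lemma sum_supp (I : eqType) (V : nmodType) (F : I -> V) (L s : seq I) :
  uniq L -> uniq s -> {subset L <= s} -> (forall k, k \notin L -> F k = 0) ->
  \sum_(i <- s) F i = \sum_(i <- L) F i.
Proof.
move=> uL us sub supp.
rewrite (bigID (mem L)) /= [X in _ + X]big1 ?addr0; last by move=> i /supp.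
rewrite -big_filter; apply: perm_big; apply: uniq_perm; rewrite ?filter_uniq //.
by move=> i; rewrite mem_filter; case iL: (i \in L) => //=; apply: sub.
Qed.

Lemma fin_has_sum (I : eqType) (f : I -> R[i]) (L : seq I) :
  uniq L -> (forall k, k \notin L -> f k = 0) ->
  Chas_sum predT f (\sum_(i <- L) f i).
Proof.
move=> uL supp eps e0; exists L; split; first by apply/allP.
move=> s us _ sub; rewrite (sum_supp uL us sub supp) subrr normr0 /=.
done.
Qed.

Lemma undup_sub (I : eqType) (P : pred I) (s1 s2 : seq I) :
  all P s1 -> all P s2 ->
  [/\ uniq (undup (s1 ++ s2)), all P (undup (s1 ++ s2)),
      {subset s1 <= undup (s1 ++ s2)} & {subset s2 <= undup (s1 ++ s2)}].
Proof.
move=> a1 a2; split; first exact: undup_uniq.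
- by rewrite all_undup all_cat a1.
- by move=> x xs; rewrite mem_undup mem_cat xs.
- by move=> x xs; rewrite mem_undup mem_cat xs orbT.
Qed.

Lemma le_eps (x : R) : (forall e, 0 < e -> x < e) -> x <= 0.
Proof.
move=> H; apply/ler_addgt0Pr => e e0; rewrite add0r; exact: ltW (H e e0).
Qed.

Lemma Chas_unique (I : eqType) (P : pred I) (f : I -> R[i]) S S' :
  Chas_sum P f S -> Chas_sum P f S' -> S = S'.
Proof.
move=> H1 H2.
have key : complex.Re `|S - S'| <= 0.
  apply: le_eps => e e0.
  have e20 : 0 < e / 2 by rewrite divr_gt0.
  have [s1 [a1 h1]] := H1 _ e20; have [s2 [a2 h2]] := H2 _ e20.
  have [u a b c] := undup_sub a1 a2.
  have d1 := h1 _ u a b; have d2 := h2 _ u a c.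
  have -> : S - S' = (\sum_(i <- undup (s1 ++ s2)) f i - S') +
                      - (\sum_(i <- undup (s1 ++ s2)) f i - S).
    by ring.
  apply: (le_lt_trans (Renorm_tri _ _)); rewrite Renorm_N.
  lra.
apply/eqP; rewrite -subr_eq0 -normr_eq0 normRe.
have -> : complex.Re `|S - S'| = 0 by apply/eqP; rewrite eq_le key Renorm_ge0.
done.
Qed.

End Sums.

Section Unit.
Variable R : realType.
Variable E : lmodType R[i].
Variable ip : E -> E -> R[i].
Hypothesis Hip : is_inner_product ip.

Lemma in_l2_fin (f : state E) (L : seq (nat * nat)) :
  (forall k, k \notin L -> f k = 0) -> in_l2 ip f.
Proof.
move=> supp; exists (\sum_(i <- undup L) ip (f i) (f i)).
apply: fin_has_sum; first exact: undup_uniq.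
by move=> k; rewrite mem_undup => /supp ->; rewrite ip0.
Qed.

Lemma l2_fin (f : state E) (L : seq (nat * nat)) : uniq L ->
  (forall k, k \notin L -> f k = 0) ->
  l2_norm_sq ip f (\sum_(i <- L) ip (f i) (f i)).
Proof.
move=> uL supp; apply: fin_has_sum => // k /supp ->; by rewrite ip0.
Qed.

Definition Fs (e : nat * nat -> E) (s : seq (nat * nat)) : state E :=
  fun k => \sum_(m <- s) ket m (e m) k.

Lemma Fs_supp e s k : k \notin s -> Fs e s k = 0.
Proof.
move=> ks; rewrite /Fs big1_seq // => i /andP[_ iS]; rewrite /ket.
case: eqP => // ki; by rewrite ki iS in ks.
Qed.

Lemma Fs_in e s k : uniq s -> k \in s -> Fs e s k = e k.
Proof.
elim: s => [//|x s IH] /= /andP[xs us]; rewrite /Fs big_cons -/(Fs e s k) inE.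
rewrite {1}/ket; case: eqP => [-> _|kx /= ks].
  by rewrite Fs_supp // addr0.
by rewrite add0r IH.
Qed.

Variable U : state E -> state E.
Hypothesis HU : unitary ip U.

Lemma U0 : U (fun _ => 0) = (fun _ => 0).
Proof.
case: HU => lin _ _.
have l0 : in_l2 ip (fun _ : nat * nat => (0 : E)) by apply: (in_l2_fin (L := [::])).
have := lin 0 0 _ _ l0 l0.
have -> : (fun m : nat * nat => 0 *: (fun _ : nat * nat => (0 : E)) m + 0 *: (fun _ : nat * nat => (0:E)) m) = (fun _ => 0).
  by apply: functional_extensionality => m; rewrite !scale0r addr0.
move=> ->; apply: functional_extensionality => m; by rewrite !scale0r addr0.
Qed.

Lemma UFs e s : U (Fs e s) = (fun k => \sum_(m <- s) U (ket m (e m)) k).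
Proof.
case: HU => lin _ _.
elim: s => [|x s IH].
  have -> : Fs e [::] = (fun _ => 0).
    by apply: functional_extensionality => k; rewrite /Fs big_nil.
  rewrite U0; apply: functional_extensionality => k; by rewrite big_nil.
have -> : Fs e (x :: s) = (fun k => 1 *: ket x (e x) k + 1 *: Fs e s k).
  by apply: functional_extensionality => k; rewrite /Fs big_cons !scale1r.
rewrite lin; last first.
- by apply: (in_l2_fin (L := s)) => k; apply: Fs_supp.
- by apply: (in_l2_fin (L := [:: x])) => k; rewrite inE /ket => /negbTE ->.
rewrite IH; apply: functional_extensionality => k; by rewrite big_cons !scale1r.
Qed.

Lemma ket_sum (I : Type) (s : seq I) (m : nat * nat) (v : I -> E) k :
  \sum_(i <- s) ket m (v i) k = ket m (\sum_(i <- s) v i) k.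
Proof.
rewrite /ket; case: eqP => // _; by rewrite big1.
Qed.

Variables (e g01 g10 g00 : nat * nat -> E).
Hypothesis hU : forall m : nat * nat,
     U (ket m (e m)) =
       (fun k => ket (0, 1)%N (g01 m) k + ket (1, 0)%N (g10 m) k
                 + ket (0, 0)%N (g00 m) k).

Lemma key s : uniq s ->
  \sum_(m <- s) ip (e m) (e m) =
  ip (\sum_(m <- s) g01 m) (\sum_(m <- s) g01 m) +
  (ip (\sum_(m <- s) g10 m) (\sum_(m <- s) g10 m) +
  (ip (\sum_(m <- s) g00 m) (\sum_(m <- s) g00 m) + 0)).
Proof.
move=> us.
set A := \sum_(m <- s) g01 m; set B := \sum_(m <- s) g10 m;
  set C := \sum_(m <- s) g00 m.
pose G : state E := fun k => ket (0, 1)%N A k + ket (1, 0)%N B k + ket (0, 0)%N C k.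
have UG : U (Fs e s) = G.
  rewrite UFs; apply: functional_extensionality => k.
  under eq_bigr do rewrite hU.
  by rewrite !big_split /= !ket_sum.
have n1 : l2_norm_sq ip (Fs e s) (\sum_(m <- s) ip (e m) (e m)).
  have := l2_fin us (Fs_supp e (s:=s)).
  by rewrite (eq_big_seq (fun m => ip (e m) (e m))) // => m ms; rewrite Fs_in.
case: HU => _ np _.
have n2 := np _ _ n1; rewrite UG in n2.
have n3 : l2_norm_sq ip G (\sum_(m <- [:: (0, 1)%N; (1, 0)%N; (0, 0)%N]) ip (G m) (G m)).
  apply: l2_fin => // k; rewrite !inE => /norP[/negbTE h1 /norP[/negbTE h2 /negbTE h3]].
  by rewrite /G /ket h1 h2 h3 !addr0.
rewrite (Chas_unique n2 n3) !big_cons big_nil /G /ket /=.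
by rewrite !addr0 !add0r.
Qed.

End Unit.

Lemma real_lim (R : realType) (X p : R) : 0 <= p ->
  (forall t eps, 0 < t -> 0 < eps -> X <= (1 + t) * (p + eps) + (1 + t^-1) * eps) ->
  X <= p.
Proof.
move=> p0 H; apply/ler_addgt0Pr => e e0.
have D0 : 0 < 2 * (p + 1) + e by lra.
set t := e / (2 * (p + 1) + e).
have t0 : 0 < t by rewrite divr_gt0.
have t1 : t <= 1 by rewrite ler_pdivrMr // mul1r; lra.
have htp : t * (p + 1) <= e / 2.
  rewrite /t mulrAC ler_pdivrMr //.
  have -> : e / 2 * (2 * (p + 1) + e) = e * (p + 1) + e * e / 2 by field.
  have : 0 <= e * e / 2 by apply: divr_ge0; [apply: mulr_ge0; lra | lra].
  lra.
set eps := t * e / 8.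
have eps0 : 0 < eps by rewrite divr_gt0 // mulr_gt0.
have hinv : t^-1 * eps = e / 8.
  by rewrite /eps; field; rewrite gt_eqF.
have hte : t * eps <= eps by have := ler_wpM2r (ltW eps0) t1; rewrite mul1r.
have epsle : eps <= e / 8 by rewrite /eps; have := ler_wpM2r (ltW e0) t1; rewrite mul1r => h; lra.
have := H t eps t0 eps0.
rewrite !mulrDl !mulrDr !mul1r hinv.
rewrite mulrDr mulr1 in htp.
lra.
Qed.

Section Bound.
Variable R : realType.
Variable E : lmodType R[i].
Variable ip : E -> E -> R[i].
Hypothesis Hip : is_inner_product ip.

Lemma bound (P : pred (nat * nat)) (e g : nat * nat -> E) (S0 : E) (pd : R[i]) :
  (forall s, uniq s -> nsq ip (\sum_(m <- s) g m) <=
                       complex.Re (\sum_(m <- s) ip (e m) (e m))) ->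
  Ehas_sum ip P g S0 -> Chas_sum P (fun m => ip (e m) (e m)) pd ->
  [/\ nsq ip S0 <= complex.Re pd, complex.Im pd = 0 & 0 <= complex.Re pd].
Proof.
move=> Hle HS Hp.
have main : forall t eps, 0 < t -> 0 < eps ->
   [/\ nsq ip S0 <= (1 + t) * (complex.Re pd + eps) + (1 + t^-1) * eps,
       `|complex.Im pd| < eps & - eps < complex.Re pd].
  move=> t eps t0 e0.
  have [s1 [a1 h1]] := HS _ e0; have [s2 [a2 h2]] := Hp _ e0.
  have [u a b c] := undup_sub a1 a2.
  have d1 := h1 _ u a b; have d2 := h2 _ u a c.
  move: d1 d2 (Hle _ u).
  set s := undup (s1 ++ s2).
  set A := \sum_(m <- s) g m; set Se := \sum_(m <- s) ip (e m) (e m).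
  move=> d1 d2 hA.
  have hS : S0 = A + (S0 - A) by rewrite addrC subrK.
  have n1 : nsq ip S0 <= (1 + t) * nsq ip A + (1 + t^-1) * nsq ip (A - S0).
    rewrite -[A - S0]opprB (nsqN Hip) {1}hS; exact: nsqD_le.
  have ImSe : complex.Im Se = 0.
    by rewrite /Se Im_sum big1 // => m _; rewrite ipIm.
  have r1 : complex.Re Se - complex.Re pd < eps.
    by have := Re_le_norm (Se - pd); rewrite ReB => h; lra.
  have r2 : complex.Re pd - complex.Re Se < eps.
    by have := Re_le_norm (pd - Se); rewrite ReB distrC => h; lra.
  have r3 : `|complex.Im pd| < eps.
    by have := Im_le_norm (Se - pd); rewrite ImB ImSe sub0r normrN => h; lra.
  have nA0 := nsq_ge0 Hip A.
  have nB0 := nsq_ge0 Hip (A - S0).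
  split => //; last by lra.
  apply: (le_trans n1); apply: lerD.
    apply: ler_wpM2l; first by lra.
    lra.
  apply: ler_wpM2l; last exact: ltW.
  have : 0 < t^-1 by rewrite invr_gt0.
  lra.
have Im0 : complex.Im pd = 0.
  apply/eqP; rewrite -normr_le0; apply: le_eps => eps e0.
  by have [_ h _] := main 1 eps ltr01 e0.
have Re0 : 0 <= complex.Re pd.
  rewrite -oppr_le0; apply: le_eps => eps e0.
  have [_ _ h] := main 1 eps ltr01 e0; lra.
split => //.
apply: real_lim => // t eps t0 e0.
by have [h _ _] := main t eps t0 e0.
Qed.

End Bound.

Theorem lemma1 (R : realType) (E : lmodType R[i]) (ip : E -> E -> R[i])
  (e : nat * nat -> E)
  (U : state E -> state E)
  (g01 g10 g00 : nat * nat -> E)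
  (S0 S1 : E) (pdouble : R[i]) :
  is_hilbert ip ->
  (* |psi_0> = sum_m |m1,m0>_B |e_m>_E is a unit vector *)
  l2_norm_sq ip e 1 ->
  unitary ip U ->
  (forall m : nat * nat,
     U (ket m (e m)) =
       (fun k => ket (0, 1)%N (g01 m) k + ket (1, 0)%N (g10 m) k
                 + ket (0, 0)%N (g00 m) k)) ->
  (* S0 = sum_{m1>=1, m0>=1} g^{0,1}_m,  S1 = sum_{m1>=1, m0>=1} g^{1,0}_m *)
  Ehas_sum ip (fun m : nat * nat => (0 < m.1)%N && (0 < m.2)%N) g01 S0 ->
  Ehas_sum ip (fun m : nat * nat => (0 < m.1)%N && (0 < m.2)%N) g10 S1 ->
  (* p_double = sum_{m1>=1, m0>=1} <e_m|e_m> *)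
  Chas_sum (fun m : nat * nat => (0 < m.1)%N && (0 < m.2)%N)
    (fun m => ip (e m) (e m)) pdouble ->
  let h0 := (sqrtC 2)^-1 *: S0 in
  let h1 := (sqrtC 2)^-1 *: S1 in
  ip h0 h0 <= pdouble / 2 /\ ip h1 h1 <= pdouble / 2.
Proof.
move=> [Hip _] _ HU hU H0 H1 Hpd h0 h1.
have K := key Hip HU hU.
have Hle01 : forall s, uniq s -> nsq ip (\sum_(m <- s) g01 m) <=
                       complex.Re (\sum_(m <- s) ip (e m) (e m)).
  move=> s us; rewrite (K s us) !ReD /= -!/(nsq ip _).
  have := nsq_ge0 Hip (\sum_(m <- s) g10 m); have := nsq_ge0 Hip (\sum_(m <- s) g00 m).
  lra.
have Hle10 : forall s, uniq s -> nsq ip (\sum_(m <- s) g10 m) <=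
                       complex.Re (\sum_(m <- s) ip (e m) (e m)).
  move=> s us; rewrite (K s us) !ReD /= -!/(nsq ip _).
  have := nsq_ge0 Hip (\sum_(m <- s) g01 m); have := nsq_ge0 Hip (\sum_(m <- s) g00 m).
  lra.
have [b0 Im0 _] := bound Hip Hle01 H0 Hpd.
have [b1 _ _] := bound Hip Hle10 H1 Hpd.
set c := (sqrtC 2)^-1 : R[i].
have c0 : 0 <= c by rewrite invr_ge0 sqrtC_ge0 ler0n.
have cc : conjc c = c := geC0_conj c0.
have c2 : c * c = 2^-1 by rewrite -expr2 exprVn sqrtCK.
have fin : forall S, nsq ip S <= complex.Re pdouble -> ip (c *: S) (c *: S) <= pdouble / 2.
  move=> S hS; rewrite (ipZl Hip) (ipZ Hip) cc mulrA c2 mulrC.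
  apply: ler_wpM2r; first by rewrite invr_ge0 ler0n.
  rewrite lecE (ipIm Hip) Im0 eqxx /=; exact: hS.
by split; apply: fin.
Qed.
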